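(* Consider the non-amortized variant of the algorithmic framework described below with parameters $\gamma\in(0,1)$, $\eta=\gamma^{-1}$ and $\xi=2\gamma^{-1}$. Then the framework maintains $\ell_i\le(1+\eta)T$ for every machine $i$, where $\ell_i=\sum_{j\in \hat J_i\cup\check J_i}p_j/s_i$ is the total load of machine $i$ and $T$ is the current guess.
   Context: Problem: machines $1,\dots,m$ with speeds $s_1\ge s_2\ge\dots\ge s_m>0$; jobs arrive online, job $j$ has size $p_j>0$; the load of job $j$ on machine $i$ is $p_j/s_i$. Framework (non-amortized variant): it keeps a guess $T$ and for each machine $i$ a partition of its jobs into old jobs $\hat J_i$ and new jobs $\check J_i$. Machine $i$ is saturated if $\check\ell_i:=\sum_{j\in\check J_i}p_j/s_i\ge T$, and $\eta$-eligible for job $j$ if $p_j/s_i\le \eta T$. Let $\tilde{\mathcal M}(\eta,j)$ be the set of machines that are $\eta$-eligible for $j$ and not saturated. When the first job $j_1$ arrives, set $T=p_{j_1}/s_1$ and place $j_1$ on machine 1. When a later job $j^*$ arrives, put it into a priority queue $Q$ (larger size = higher priority) and run: while $Q$ is nonempty, remove the largest job $j'$ from $Q$; then repeat: if $\tilde{\mathcal M}(\eta,j')\ne\emptyset$, choose a slowest machine $i'$ in it, move every $j\in\hat J_{i'}$ with $p_j\ge \eta^{-1}p_{j'}$ from $\hat J_{i'}$ to $\check J_{i'}$, and if $i'$ is still not saturated stop repeating; otherwise set $T:=\xi T$ and for every machine $i$ move all jobs of $\check J_i$ to $\hat J_i$. After a machine $i'$ is found, set $\pi:=\gamma p_{j'}$;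 go through the jobs $j\in\hat J_{i'}$ in non-increasing order of size and, whenever $p_j\le\pi$, set $\pi:=\pi-p_j$ and move $j$ from $\hat J_{i'}$ into $Q$ (removing it from $i'$). Finally add $j'$ to $\check J_{i'}$ (any leftover $\pi$ is discarded). *)

(* Defs.v *)
From HB Require Import structures.
From mathcomp Require Import all_boot all_order all_algebra.
Set Implicit Arguments. Unset Strict Implicit. Unset Printing Implicit Defensive.
Import Order.TTheory GRing.Theory Num.Theory.
Local Open Scope ring_scope.

(* Idle       : waiting (Q nonempty: about to extract the largest job;
                Q empty: waiting for the next arrival).
   Search j   : job j has been extracted from Q; inside the "repeat" loop.
   Found j i  : the loop stopped with machine i; about to remove old jobs
                of i into Q and add j to the new jobs of i. *)
Inductive phase (m : nat) := Idle | Search of nat | Found of nat & 'I_m.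

(* Jobs are natural numbers: job j is the (j+1)-st arriving job. *)
Record state (R : Type) (m : nat) := State {
  guess : R;
  oldJ : 'I_m -> seq nat;        (* \hat J_i *)
  newJ : 'I_m -> seq nat;        (* \check J_i *)
  queue : seq nat;
  arrived : nat;
  ph : phase m }.

Section Framework.
Variables (R : realFieldType) (m : nat) (hm : (0 < m)%N).
Variables (s : 'I_m -> R) (p : nat -> R) (gamma eta xi : R).

Definition machine1 : 'I_m := Ordinal hm.

Definition mload (l : seq nat) (i : 'I_m) : R := (\sum_(j <- l) p j) / s i.

Definition load (st : state R m) (i : 'I_m) : R := mload (oldJ st i ++ newJ st i) i.

Definition saturated (st : state R m) (i : 'I_m) : Prop :=
  guess st <= mload (newJ st i) i.

Definition eligible (st : state R m) (j : nat) (i : 'I_m) : Prop :=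
  p j / s i <= eta * guess st.

(* membership in \tilde M(eta, j) *)
Definition avail (st : state R m) (j : nat) (i : 'I_m) : Prop :=
  eligible st j i /\ ~ saturated st i.

(* Greedy removal: go through the list (sorted by non-increasing size);
   whenever p_j <= pi, subtract and remove.  Returns (removed, kept). *)
Fixpoint greedy (pi : R) (l : seq nat) : seq nat * seq nat :=
  match l with
  | [::] => ([::], [::])
  | j :: l' =>
      if p j <= pi then let r := greedy (pi - p j) l' in (j :: r.1, r.2)
      else let r := greedy pi l' in (r.1, j :: r.2)
  end.

Definition init_state : state R m :=
  State 0 (fun _ => [::]) (fun _ => [::]) [::] 0 (@Idle m).

(* result of moving the old jobs j of machine i with p_j >= eta^-1 p_{j'}
   into the new jobs; the phase records whether the repeat loop stops *)
Definition promote (st : state R m) (j' : nat) (i : 'I_m) : state R m :=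
  let big k := eta^-1 * p j' <= p k in
  let nw := newJ st i ++ filter big (oldJ st i) in
  State (guess st)
    (fun k => if k == i then filter (predC big) (oldJ st i) else oldJ st k)
    (fun k => if k == i then nw else newJ st k)
    (queue st) (arrived st)
    (if guess st <= mload nw i then @Search m j' else @Found m j' i).

Inductive step : state R m -> state R m -> Prop :=
  | step_first st :
      ph st = @Idle m -> queue st = [::] -> arrived st = 0%N ->
      step st (State (p 0%N / s machine1) (oldJ st)
                 (fun k => if k == machine1 then rcons (newJ st k) 0%N else newJ st k)
                 [::] 1 (@Idle m))
  | step_arrive st :
      ph st = @Idle m -> queue st = [::] -> (0 < arrived st)%N ->
      step st (State (guess st) (oldJ st) (newJ st) [:: arrived st]
                 (arrived st).+1 (@Idle m))
  | step_pop st j :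
      ph st = @Idle m -> j \in queue st ->
      (forall k, k \in queue st -> p k <= p j) ->
      step st (State (guess st) (oldJ st) (newJ st) (rem j (queue st))
                 (arrived st) (@Search m j))
  | step_select st j i :
      ph st = @Search m j -> avail st j i ->
      (forall k, avail st j k -> s i <= s k) ->
      step st (promote st j i)
  | step_raise st j :
      ph st = @Search m j -> (forall i, ~ avail st j i) ->
      step st (State (xi * guess st) (fun k => oldJ st k ++ newJ st k)
                 (fun _ => [::]) (queue st) (arrived st) (@Search m j))
  (* removal of old jobs of i (non-increasing order, ties arbitrary) with
     budget gamma * p_{j'}, and placement of j' as a new job on i *)
  | step_place st j i o :
      ph st = @Found m j i -> perm_eq o (oldJ st i) ->
      sorted (fun a b => p b <= p a) o ->
      step st (State (guess st)
                 (fun k => if k == i then (greedy (gamma * p j) o).2 else oldJ st k)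
                 (fun k => if k == i then rcons (newJ st k) j else newJ st k)
                 (queue st ++ (greedy (gamma * p j) o).1)
                 (arrived st) (@Idle m)).

Inductive reachable : state R m -> Prop :=
  | reach_init : reachable init_state
  | reach_step st st' : reachable st -> step st st' -> reachable st'.

End Framework.

(* Main.v *)
Require Import Defs.
From HB Require Import structures.
From mathcomp Require Import all_boot all_order all_algebra.
From mathcomp Require Import ring lra.
Import Order.TTheory GRing.Theory Num.Theory.
Local Open Scope ring_scope.

Lemma greedy_sum {R : realFieldType} (p : nat -> R) pi l :
  \sum_(x <- (greedy p pi l).1) p x + \sum_(x <- (greedy p pi l).2) p x
  = \sum_(x <- l) p x.
Proof.
elim: l pi => [|a l IH] pi /=; first by rewrite !big_nil addr0.
case: ifP => _ /=; rewrite !big_cons; first by rewrite -addrA IH.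
by rewrite addrCA IH.
Qed.

Lemma greedy_half {R : realFieldType} (p : nat -> R) (hp : forall j, 0 < p j) l :
  forall a pi, path (fun a b => p b <= p a) a l -> p a <= pi ->
  (greedy p pi (a :: l)).2 != [::] ->
  pi < 2 * \sum_(x <- (greedy p pi (a :: l)).1) p x.
Proof.
elim: l => [|b l IH] a pi /=.
  by move=> _ ->.
move=> /andP[hba hpath] hapi; rewrite hapi /=.
have hs0 : forall l', 0 <= \sum_(x <- l') p x.
  by move=> l'; apply: sumr_ge0 => x _; apply: ltW.
case: ifP => hb /= hk.
- have := IH b (pi - p a) hpath hb.
  rewrite /= hb /= => /(_ hk).
  rewrite big_cons => h.
  rewrite !big_cons in h *. have := hp a. move: h. set S := \sum_(_ <- _) _. have : 0 <= S by apply: hs0. lra.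
- rewrite big_cons.
  have := hs0 (greedy p (pi - p a) l).1.
  move/negbT: hb; rewrite -ltNge => hb.
  lra.
Qed.

Lemma mload_cat {R : realFieldType} {m} (s : 'I_m -> R) p l1 l2 i :
  mload s p (l1 ++ l2) i = mload s p l1 i + mload s p l2 i.
Proof. by rewrite /mload big_cat mulrDl. Qed.

Lemma mload_nil {R : realFieldType} {m} (s : 'I_m -> R) p i :
  mload s p [::] i = 0.
Proof. by rewrite /mload big_nil mul0r. Qed.

Lemma mload_rcons {R : realFieldType} {m} (s : 'I_m -> R) p l j i :
  mload s p (rcons l j) i = mload s p l i + p j / s i.
Proof. by rewrite -cats1 mload_cat /mload big_seq1. Qed.

Lemma mload_ge0 {R : realFieldType} {m} (s : 'I_m -> R) p l i :
  0 < s i -> (forall j, 0 < p j) -> 0 <= mload s p l i.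
Proof.
move=> hs hp; rewrite /mload; apply: divr_ge0; last exact: ltW.
by apply: sumr_ge0 => x _; apply: ltW.
Qed.

Lemma mload_filter {R : realFieldType} {m} (s : 'I_m -> R) p (P : pred nat) l i :
  mload s p (filter P l) i + mload s p (filter (predC P) l) i = mload s p l i.
Proof.
by rewrite /mload -mulrDl !big_filter [in RHS](bigID P) /=.
Qed.

Lemma place_key {R : realFieldType} (p : nat -> R) (hp : forall j, 0 < p j)
  o old c : perm_eq o old -> sorted (fun a b => p b <= p a) o ->
  (forall k, k \in old -> p k < c) -> (greedy p c o).2 != [::] ->
  c < 2 * \sum_(x <- (greedy p c o).1) p x.
Proof.
case: o => [|a l] hperm hsort hold; first by [].
apply: greedy_half => //; apply: ltW; apply: hold.
by rewrite -(perm_mem hperm) mem_head.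
Qed.

Definition Inv {R : realFieldType} {m} (s : 'I_m -> R) (p : nat -> R) (gamma : R)
  (st : state R m) : Prop :=
  [/\ 0 <= guess st,
   (arrived st = 0%N -> [/\ ph st = @Defs.Idle m, queue st = [::] &
        forall i, oldJ st i = [::] /\ newJ st i = [::]]),
   forall i, mload s p (oldJ st i) i + mload s p (newJ st i) i
             <= (1 + gamma^-1) * guess st,
   forall i, mload s p (oldJ st i) i + gamma / 2 * mload s p (newJ st i) i
             <= (1 + gamma) / 2 * guess st &
   forall j i, ph st = Defs.Found j i ->
     [/\ mload s p (newJ st i) i < guess st,
         p j / s i <= gamma^-1 * guess st &
         forall k, k \in oldJ st i -> p k < gamma * p j]].

Lemma inv_reach (R : realFieldType) (m : nat) (hm : (0 < m)%N)
  (s : 'I_m -> R) (p : nat -> R) (gamma : R) :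
  0 < gamma -> gamma < 1 ->
  (forall i, 0 < s i) ->
  (forall j, 0 < p j) ->
  forall st, reachable hm s p gamma gamma^-1 (2 * gamma^-1) st ->
  Inv s p gamma st.
Proof.
move=> g0 g1 hs hp st H.
have gi0 : 0 < gamma^-1 by rewrite invr_gt0.
have ggi : gamma * gamma^-1 = 1 by rewrite mulfV // gt_eqF.
have ggi1 : 1 < gamma^-1 by rewrite invf_gt1.
have ml0 := fun l i => mload_ge0 s p l i (hs i) hp.
elim: H => [|st0 st' _ IH Hs].
  split => //=.
  - by move=> i; rewrite !mload_nil mulr0 addr0.
  - by move=> i; rewrite !mload_nil mulr0 mulr0 addr0.
move: IH; case: Hs => {st'}.
-
  move=> st0' hph hq ha [hT hA hC hD hE].
  have [_ _ hl] := hA ha.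
  split => //=.
  + by apply: divr_ge0; apply: ltW.
  + move=> i; case: ifP => [/eqP ->|_]; rewrite (proj1 (hl _)) ?(proj2 (hl _)) ?mload_rcons !mload_nil.
      have := hp 0%N; have := hs (machine1 hm).
      set x := p 0%N / s _. have : 0 <= x by apply: divr_ge0; apply: ltW.
      nra.
    have : 0 <= p 0%N / s (machine1 hm) by apply: divr_ge0; apply: ltW.
    nra.
  + move=> i; case: ifP => [/eqP ->|_]; rewrite (proj1 (hl _)) ?(proj2 (hl _)) ?mload_rcons !mload_nil.
      set x := p 0%N / s _. have : 0 <= x by apply: divr_ge0; apply: ltW.
      nra.
    have : 0 <= p 0%N / s (machine1 hm) by apply: divr_ge0; apply: ltW.
    nra.
-
  move=> st0' hph hq ha [hT hA hC hD hE].
  by split => //=.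
-
  move=> st0' j hph hj hmax [hT hA hC hD hE].
  split => //=.
  by move=> /hA [_ hq _]; rewrite hq in hj.
-
  move=> st0' j i hph hav hmin [hT hA hC hD hE].
  rewrite /promote; split => //=.
  + by move=> /hA [hph']; rewrite hph' in hph.
  + move=> k; case: ifP => [/eqP ->|_]; last exact: hC.
    rewrite mload_cat.
    set Y := mload s p (filter (predC _) _) i.
    set X := mload s p (filter _ _) i.
    have hXY : Y + X = mload s p (oldJ st0' i) i.
      by rewrite addrC mload_filter.
    have := hC i; rewrite -hXY.
    lra.
  + move=> k; case: ifP => [/eqP ->|_]; last exact: hD.
    rewrite mload_cat.
    set Y := mload s p (filter (predC _) _) i.
    set X := mload s p (filter _ _) i.
    have hXY : Y + X = mload s p (oldJ st0' i) i.
      by rewrite addrC mload_filter.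
    have := hD i; rewrite -hXY.
    have : 0 <= X by apply: ml0.
    nra.
  + move=> j' i'; case: ifP => // hc [<- <-]; split.
    * by rewrite eqxx ltNge hc.
    * by case: hav.
    * move=> k; rewrite eqxx mem_filter /= invrK -ltNge => /andP [hk _].
      exact: hk.
-
  move=> st0' j hph hnav [hT hA hC hD hE].
  split => //=.
  + apply: mulr_ge0 => //; apply: mulr_ge0 => //; exact: ltW.
  + by move=> /hA [hph']; rewrite hph' in hph.
  + move=> k; rewrite mload_nil addr0 mload_cat.
    have := hC k.
    set O := mload _ _ _ _; set N := mload _ _ _ _.
    nra.
  + move=> k; rewrite mload_nil mulr0 addr0 mload_cat.
    have := hC k.
    set O := mload _ _ _ _; set N := mload _ _ _ _.
    have ggT : gamma * gamma^-1 * guess st0' = guess st0' by rewrite ggi mul1r.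
    nra.
-
  move=> st0' j i o hph hperm hsort [hT hA hC hD hE].
  have [hN hP hold] := hE j i hph.
  have hkey0 := @place_key _ p hp _ _ _ hperm hsort hold.
  have hsum := greedy_sum p (gamma * p j) o.
  rewrite (perm_big _ hperm) in hsum.
  set r := (greedy p (gamma * p j) o).1 in hkey0 hsum *.
  set k := (greedy p (gamma * p j) o).2 in hkey0 hsum *.
  have hsum' : mload s p r i + mload s p k i = mload s p (oldJ st0' i) i.
    by rewrite /mload -mulrDl hsum.
  have hkey : k != [::] -> gamma * (p j / s i) < 2 * mload s p r i.
    move=> /hkey0 h; rewrite /mload !mulrA.
    by rewrite ltr_pM2r ?invr_gt0.
  have hPge : 0 <= p j / s i by apply: divr_ge0; apply: ltW.
  have hr0 : 0 <= mload s p r i by apply: ml0.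
  have ggT : gamma * gamma^-1 * guess st0' = guess st0' by rewrite ggi mul1r.
  split => //=.
  + by move=> /hA [hph']; rewrite hph' in hph.
  + move=> k'; case: ifP => [/eqP ->|_]; last exact: hC.
    rewrite mload_rcons.
    have := hD i; rewrite -hsum'.
    move: hN hP hPge hr0 ggT hkey.
    set P := p j / s i; set N := mload _ _ (newJ _ _) _; set T := guess _.
    set Rl := mload _ _ r _; set K := mload _ _ k _.
    case: (eqVneq k [::]) => [hk0|hk].
      rewrite /K hk0 mload_nil. nra.
    move=> hN hP hPge hr0 ggT /(_ isT) hk' hD'.
    have h1 : 0 <= (1 - gamma / 2) * (T - N) by apply: mulr_ge0; lra.
    have h2 : 0 <= (1 - gamma / 2) * (gamma^-1 * T - P) by apply: mulr_ge0; lra.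
    nra.
  + move=> k'; case: ifP => [/eqP ->|_]; last exact: hD.
    rewrite mload_rcons.
    have := hD i; rewrite -hsum'.
    move: hN hP hPge hr0 ggT hkey.
    set P := p j / s i; set N := mload _ _ (newJ _ _) _; set T := guess _.
    set Rl := mload _ _ r _; set K := mload _ _ k _.
    case: (eqVneq k [::]) => [hk0|hk].
      rewrite /K hk0 mload_nil. nra.
    move=> hN hP hPge hr0 ggT /(_ isT) hk' hD'.
    nra.
Qed.

Theorem lemma6 (R : realFieldType) (m : nat) (hm : (0 < m)%N)
  (s : 'I_m -> R) (p : nat -> R) (gamma : R) :
  0 < gamma -> gamma < 1 ->
  (forall i, 0 < s i) ->
  (forall i k : 'I_m, (i <= k)%N -> s k <= s i) ->
  (forall j, 0 < p j) ->
  forall st, reachable hm s p gamma gamma^-1 (2 * gamma^-1) st ->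
  forall i, load s p st i <= (1 + gamma^-1) * guess st.
Proof.
move=> g0 g1 hs _ hp st H i.
have [_ _ hC _ _] := @inv_reach R m hm s p gamma g0 g1 hs hp st H.
by rewrite /load mload_cat; apply: hC.
Qed.
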